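(* Let $G$ be a multiplicative monoid with identity, let $N$ be a $G$-graded near-ring and let $P$, $I$ be graded ideals of $N$ with $I\subseteq P$. Let $\pi:N\to\bar N:=N/I$ be the canonical epimorphism. If $P$ is a graded almost prime ideal of $N$, then $\pi(P)$ is a graded almost prime ideal of $\bar N$.
   Context: A near-ring $(N,+,\cdot)$ is a set with two binary operations such that $(N,+)$ is a group (not necessarily abelian), $(N,\cdot)$ is a semigroup, and $(a+b)y = ay+by$ for all $a,b,y\in N$. For a multiplicative monoid $G$ with identity, $N$ is a $G$-graded near-ring if there is a family $\{N_\sigma\}_{\sigma\in G}$ of additive normal subgroups of $N$ with $N=\bigoplus_{\sigma\in G}N_\sigma$ and $N_\sigma N_\tau\subseteq N_{\sigma\tau}$. An ideal $P$ is graded if $P=\bigoplus_{\sigma}(P\cap N_\sigma)$; for a graded ideal $I$, $N/I$ is $G$-graded with components $(N_\sigma+I)/I$. For ideals $I,J$, $IJ$ denotes their product and $P^2=PP$ (the paper writes $P^2\cap N$, with $N$ the ambient near-ring). A graded ideal $P$ is graded almost prime if for all graded ideals $I,J$ with $IJ\subseteq P$ and $IJ\not\subseteq P^2\cap N$, either $I\subseteq P$ or $J\subseteq P$. *)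

(* Defs.v *)
From Stdlib Require Import List.
Import ListNotations.
Set Implicit Arguments.

Record nearring := NearRing {
  nr_car :> Type;
  nr_add : nr_car -> nr_car -> nr_car;
  nr_zero : nr_car;
  nr_opp : nr_car -> nr_car;
  nr_mul : nr_car -> nr_car -> nr_car;
  nr_addA : forall a b c, nr_add a (nr_add b c) = nr_add (nr_add a b) c;
  nr_add0l : forall a, nr_add nr_zero a = a;
  nr_add0r : forall a, nr_add a nr_zero = a;
  nr_addNl : forall a, nr_add (nr_opp a) a = nr_zero;
  nr_addNr : forall a, nr_add a (nr_opp a) = nr_zero;
  nr_mulA : forall a b c, nr_mul a (nr_mul b c) = nr_mul (nr_mul a b) c;
  nr_mulDl : forall a b y, nr_mul (nr_add a b) y = nr_add (nr_mul a y) (nr_mul b y)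
}.

Arguments nr_add {n}.
Arguments nr_zero {n}.
Arguments nr_opp {n}.
Arguments nr_mul {n}.

Record monoid := Monoid {
  m_car :> Type;
  m_mul : m_car -> m_car -> m_car;
  m_one : m_car;
  m_mulA : forall a b c, m_mul a (m_mul b c) = m_mul (m_mul a b) c;
  m_mul1l : forall a, m_mul m_one a = a;
  m_mul1r : forall a, m_mul a m_one = a
}.

Arguments m_mul {m}.
Arguments m_one {m}.

Section NR.
Variable N : nearring.

Definition subset (A B : N -> Prop) : Prop := forall x, A x -> B x.

Definition normal_subgroup (A : N -> Prop) : Prop :=
  A nr_zero /\
  (forall a b, A a -> A b -> A (nr_add a b)) /\
  (forall a, A a -> A (nr_opp a)) /\
  (forall n a, A a -> A (nr_add (nr_add n a) (nr_opp n))).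

Definition ideal (I : N -> Prop) : Prop :=
  normal_subgroup I /\
  (forall i n, I i -> I (nr_mul i n)) /\
  (forall n n' i, I i -> I (nr_add (nr_mul n (nr_add n' i)) (nr_opp (nr_mul n n')))).

Definition fsum (l : list N) : N := fold_right (@nr_add N) nr_zero l.

Definition prod_set (A B : N -> Prop) : N -> Prop :=
  fun x => exists a b, A a /\ B b /\ x = nr_mul a b.

Variable G : monoid.

Definition sum_of (F : G -> N -> Prop) (x : N) : Prop :=
  exists l : list (G * N),
    Forall (fun p => F (fst p) (snd p)) l /\ x = fsum (map snd l).

(* N = ⊕_σ N_σ is a G-graded near-ring: the N_σ are normal subgroups,
   N is their internal direct sum (every element is a finite sum of
   homogeneous elements, and N_σ meets the sum of the other components
   trivially), and N_σ N_τ ⊆ N_{στ}. *)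
Definition graded (comp : G -> N -> Prop) : Prop :=
  (forall s, normal_subgroup (comp s)) /\
  (forall x, sum_of comp x) /\
  (forall s x, comp s x -> sum_of (fun t y => t <> s /\ comp t y) x -> x = nr_zero) /\
  (forall s t a b, comp s a -> comp t b -> comp (m_mul s t) (nr_mul a b)).

Definition graded_ideal (comp : G -> N -> Prop) (P : N -> Prop) : Prop :=
  ideal P /\ (forall x, P x -> sum_of (fun s y => comp s y /\ P y) x).

Definition graded_almost_prime (comp : G -> N -> Prop) (P : N -> Prop) : Prop :=
  graded_ideal comp P /\
  forall I J, graded_ideal comp I -> graded_ideal comp J ->
    subset (prod_set I J) P -> ~ subset (prod_set I J) (prod_set P P) ->
    subset I P \/ subset J P.

End NR.

Arguments subset {N}.
Arguments normal_subgroup {N}.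
Arguments ideal {N}.
Arguments fsum {N}.
Arguments prod_set {N}.
Arguments sum_of {N G}.
Arguments graded {N G}.
Arguments graded_ideal {N G}.
Arguments graded_almost_prime {N G}.

Definition nr_hom {N M : nearring} (f : N -> M) : Prop :=
  (forall a b, f (nr_add a b) = nr_add (f a) (f b)) /\
  (forall a b, f (nr_mul a b) = nr_mul (f a) (f b)).

Definition image {N M : nearring} (f : N -> M) (A : N -> Prop) : M -> Prop :=
  fun y => exists x, A x /\ f x = y.

Definition image_grading {G : monoid} {N M : nearring} (f : N -> M)
  (comp : G -> N -> Prop) : G -> M -> Prop :=
  fun s => image f (comp s).

(* Main.v *)
Require Import Defs.
From Stdlib Require Import List.
Import ListNotations.

Section Aux.
Variable N : nearring.

Lemma idem0 (x : N) : nr_add x x = x -> x = nr_zero.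
Proof.
  intro H. rewrite <- (nr_addNl _ x).
  transitivity (nr_add (nr_opp x) (nr_add x x)).
  - rewrite nr_addA, nr_addNl, nr_add0l. reflexivity.
  - now rewrite H.
Qed.

Lemma fsum_app (l1 l2 : list N) : fsum (l1 ++ l2) = nr_add (fsum l1) (fsum l2).
Proof.
  induction l1 as [|a l1 IH]; simpl.
  - now rewrite nr_add0l.
  - unfold fsum in *; simpl. rewrite IH, nr_addA. reflexivity.
Qed.

Lemma split_sum (x y : N) : x = nr_add (nr_add x (nr_opp y)) y.
Proof. now rewrite <- nr_addA, nr_addNl, nr_add0r. Qed.
End Aux.

Section Hom.
Variables (N M : nearring) (pi : N -> M).
Hypothesis hp : nr_hom pi.

Lemma hom0 : pi nr_zero = nr_zero.
Proof. apply idem0. destruct hp as [ha _]. now rewrite <- ha, nr_add0l. Qed.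

Lemma homN a : pi (nr_opp a) = nr_opp (pi a).
Proof.
  destruct hp as [ha _].
  assert (E : nr_add (pi (nr_opp a)) (pi a) = nr_zero) by now rewrite <- ha, nr_addNl, hom0.
  rewrite <- (nr_add0r _ (pi (nr_opp a))), <- (nr_addNr _ (pi a)), nr_addA, E, nr_add0l.
  reflexivity.
Qed.

Lemma hom_fsum (l : list N) : pi (fsum l) = fsum (map pi l).
Proof.
  induction l as [|a l IH]; simpl.
  - apply hom0.
  - unfold fsum in *; simpl. destruct hp as [ha _]. now rewrite ha, IH.
Qed.
End Hom.
Arguments hom0 {N M pi}.
Arguments homN {N M pi}.
Arguments hom_fsum {N M pi}.

Theorem theorem14 (G : monoid) (N Nbar : nearring) (comp : G -> N -> Prop)
  (P I : N -> Prop) (pi : N -> Nbar) :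
  graded comp ->
  graded_ideal comp P -> graded_ideal comp I -> subset I P ->
  (* pi : N -> Nbar is the canonical epimorphism onto Nbar = N/I:
     a surjective near-ring homomorphism with kernel exactly I;
     Nbar carries the induced grading Nbar_σ = pi(N_σ) = (N_σ + I)/I. *)
  nr_hom pi -> (forall y : Nbar, exists x, pi x = y) ->
  (forall x, pi x = nr_zero <-> I x) ->
  graded_almost_prime comp P ->
  graded_almost_prime (image_grading pi comp) (image pi P).
Proof.
  intros _ _ HI IP hp surj ker [HP Hap].
  pose proof hp as [ha hm].
  assert (Pback : forall a p, P p -> pi a = pi p -> P a).
  { intros a p Pp E.
    destruct HP as [[[_ [Padd _]] _] _].
    rewrite (split_sum _ a p). apply Padd; [|exact Pp].
    apply IP, ker. rewrite ha, homN, E by exact hp. apply nr_addNr. }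
  split.
  { destruct HP as [[[P0 [Padd [Popp Pconj]]] [Pmul Pid]] Pgr].
    split.
    - split; [split; [|split; [|split]]|split].
      + exists nr_zero. split; [exact P0| apply (hom0 hp)].
      + intros a b [x [Px <-]] [y [Py <-]]. exists (nr_add x y). split; auto.
      + intros a [x [Px <-]]. exists (nr_opp x). split; auto. apply (homN hp).
      + intros n a [x [Px <-]]. destruct (surj n) as [m <-].
        exists (nr_add (nr_add m x) (nr_opp m)). split; auto.
        now rewrite ha, ha, (homN hp).
      + intros i n [x [Px <-]]. destruct (surj n) as [m <-].
        exists (nr_mul x m). split; auto.
      + intros n n' i [x [Px <-]]. destruct (surj n) as [m <-]. destruct (surj n') as [m' <-].
        exists (nr_add (nr_mul m (nr_add m' x)) (nr_opp (nr_mul m m'))). split; auto.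
        now rewrite ha, (homN hp), hm, hm, ha.
    - intros y [x [Px <-]]. destruct (Pgr x Px) as [l [Fl ->]].
      exists (map (fun p => (fst p, pi (snd p))) l). split.
      + rewrite Forall_forall in *. intros [s z] Hin.
        apply in_map_iff in Hin as [[s' z'] [Eq Hin]]. simpl in Eq. injection Eq as <- <-.
        destruct (Fl _ Hin) as [C1 C2]. simpl in *. split.
        * exists z'. auto.
        * exists z'. auto.
      + rewrite (hom_fsum hp), !map_map. reflexivity. }
  intros I' J' HI' HJ' Hsub Hnsub.
  assert (pre : forall K, graded_ideal (image_grading pi comp) K ->
            graded_ideal comp (fun x => K (pi x)) /\ subset I (fun x => K (pi x))).
  { intros K [[[K0 [Kadd [Kopp Kconj]]] [Kmul Kid]] Kgr].
    assert (IK : subset I (fun x => K (pi x))).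
    { intros x Ix. apply ker in Ix. now rewrite Ix. }
    split; [|exact IK].
    split.
    - split; [split; [|split; [|split]]|split].
      + now rewrite (hom0 hp).
      + intros a b Ka Kb. rewrite ha. auto.
      + intros a Ka. rewrite (homN hp). auto.
      + intros n a Ka. rewrite ha, ha, (homN hp). auto.
      + intros i n Ki. rewrite hm. auto.
      + intros n n' i Ki. rewrite ha, (homN hp), hm, hm, ha. auto.
    - intros x Kx. destruct (Kgr _ Kx) as [l' [Fl' El']].
      assert (Hl : exists l, Forall (fun p => comp (fst p) (snd p) /\ K (pi (snd p))) l /\
                      pi (fsum (map snd l)) = fsum (map snd l')).
      { clear El'. induction l' as [|[s h] l' IH].
        - exists []. split; [constructor|]. apply (hom0 hp).
        - inversion Fl' as [|? ? [[y [Cy Ey]] Kh] Fr]; subst. simpl in *.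
          destruct (IH Fr) as [l [Fl El]].
          exists ((s, y) :: l). split.
          + constructor; [simpl; split; auto; now rewrite Ey|exact Fl].
          + simpl. unfold fsum in *. simpl. rewrite ha, El, Ey. reflexivity. }
      destruct Hl as [l [Fl El]].
      set (d := nr_add x (nr_opp (fsum (map snd l)))).
      assert (Id : I d).
      { apply ker. unfold d. rewrite ha, (homN hp), El, <- El'. apply nr_addNr. }
      destruct HI as [_ Igr]. destruct (Igr d Id) as [m [Fm Em]].
      exists (m ++ l). split.
      + apply Forall_app. split; [|exact Fl].
        rewrite Forall_forall in *. intros p Hp. destruct (Fm p Hp). split; auto.
      + rewrite map_app, fsum_app, <- Em. apply split_sum. }
  destruct (pre I' HI') as [GA IA]. destruct (pre J' HJ') as [GB IB].
  destruct (Hap _ _ GA GB) as [HA|HB].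
  - intros z [a [b [Ka [Kb ->]]]].
    assert (H1 : image pi P (pi (nr_mul a b))).
    { apply Hsub. exists (pi a), (pi b). rewrite hm. auto. }
    destruct H1 as [p [Pp Ep]]. apply (Pback _ p Pp). auto.
  - intro Hc. apply Hnsub. intros z [a' [b' [Ka [Kb ->]]]].
    destruct (surj a') as [a <-]. destruct (surj b') as [b <-].
    destruct (Hc (nr_mul a b)) as [p [q [Pp [Pq E]]]].
    { exists a, b. auto. }
    exists (pi p), (pi q). split; [exists p; auto|]. split; [exists q; auto|].
    rewrite <- hm, E, hm. reflexivity.
  - left. intros y Ky. destruct (surj y) as [x <-]. exists x. split; auto.
  - right. intros y Ky. destruct (surj y) as [x <-]. exists x. split; auto.
Qed.
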